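(* If $A$ is a finite abelian group, then $\check H^1_{ct}(\mathbb Z_{\ge0};A)=0$, where $\mathbb Z_{\ge0}$ carries the metric $d(x,y)=|x-y|$.
   Context: For a metric space $X$: a coarse cover of $U\subseteq X$ is a finite family $U_1,\dots,U_n\subseteq U$ such that for every $R\ge 0$ the set $\bigcap_i\{x\in U: d(x,U\setminus U_i)\le R\}$ is bounded. $X_{ct}$ is the Grothendieck topology on the poset of subsets of $X$ with coarse covers as coverings; a sheaf on $X_{ct}$ is a contravariant functor to abelian groups satisfying the equalizer (sheaf) condition for coarse covers. $\check H^q_{ct}(X;A)$ is the $q$th right derived functor of global sections evaluated at the constant sheaf $A_X$ (sheafification of the constant presheaf $A$). *)

(* Defs.v *)
From HB Require Import structures.
From mathcomp Require Import all_boot all_algebra.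
Set Implicit Arguments. Unset Strict Implicit. Unset Printing Implicit Defensive.
Import GRing.Theory.
Local Open Scope ring_scope.

(* Subsets of X = Z_{>=0}, modelled by nat. *)
Definition subset_of := nat -> Prop.
Definition incl (V U : subset_of) : Prop := forall x, V x -> U x.
Definition setX : subset_of := fun _ => True.
Definition inter (V W : subset_of) : subset_of := fun x => V x /\ W x.
Lemma incl_interl V W : incl (inter V W) V. Proof. by move=> x []. Qed.
Lemma incl_interr V W : incl (inter V W) W. Proof. by move=> x []. Qed.

Definition dist (x y : nat) : nat := ((x - y) + (y - x))%N.

Definition bounded (S : subset_of) : Prop := exists M : nat, forall x, S x -> (x <= M)%N.

(* d(x, S) <= R ; for S empty, d(x,S) = +oo and this fails.  Distances
   are integers so the infimum is attained. *)
Definition dist_le (x : nat) (S : subset_of) (R : nat) : Prop :=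
  exists y, S y /\ (dist x y <= R)%N.

Definition coarse_cover (U : subset_of) (n : nat) (V : 'I_n -> subset_of) : Prop :=
  (forall i, incl (V i) U) /\
  forall R : nat,
    bounded (fun x => U x /\ forall i, dist_le x (fun y => U y /\ ~ V i y) R).

Record presheaf := Presheaf {
  sec : subset_of -> zmodType;
  res : forall U V, incl V U -> sec U -> sec V;
  res_sub : forall U V (h : incl V U) (x y : sec U),
      res h (x - y) = res h x - res h y;
  res_id : forall U (h : incl U U) (x : sec U), res h x = x;
  res_comp : forall U V W (hVU : incl V U) (hWV : incl W V) (hWU : incl W U)
      (x : sec U), res hWV (res hVU x) = res hWU x }.

Definition is_sheaf (F : presheaf) : Prop :=
  forall (U : subset_of) (n : nat) (V : 'I_n -> subset_of)
         (hV : forall i, incl (V i) U),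
    coarse_cover U V ->
    (forall s t : sec F U, (forall i, res (hV i) s = res (hV i) t) -> s = t) /\
    (forall t : forall i, sec F (V i),
       (forall i j, res (@incl_interl (V i) (V j)) (t i)
                  = res (@incl_interr (V i) (V j)) (t j)) ->
       exists s : sec F U, forall i, res (hV i) s = t i).

Record sheaf := Sheaf { sh_psh :> presheaf; sh_sheaf : is_sheaf sh_psh }.

Record pmorph (F G : presheaf) := PMorph {
  mapp : forall U, sec F U -> sec G U;
  mapp_sub : forall U (x y : sec F U), mapp (x - y) = mapp x - mapp y;
  mapp_nat : forall U V (h : incl V U) (x : sec F U),
      mapp (res h x) = res h (mapp x) }.
Arguments mapp {F G} p {U} x.

Definition mono (F G : presheaf) (f : pmorph F G) : Prop :=
  forall U, injective (@mapp F G f U).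

Definition sheaf_epi (F G : sheaf) (f : pmorph F G) : Prop :=
  forall (H : sheaf) (a b : pmorph G H),
    (forall U (x : sec F U), mapp a (mapp f x) = mapp b (mapp f x)) ->
    forall U (y : sec G U), mapp a y = mapp b y.

Definition sheaf_injective (I : sheaf) : Prop :=
  forall (F G : sheaf) (f : pmorph F G) (g : pmorph F I),
    mono f -> exists h : pmorph G I,
      forall U (x : sec F U), mapp h (mapp f x) = mapp g x.

Definition cst_presheaf (A : zmodType) : presheaf :=
  @Presheaf (fun _ => A) (fun U V _ x => x)
    (fun _ _ _ _ _ => erefl) (fun _ _ _ => erefl)
    (fun _ _ _ _ _ _ _ => erefl).

Definition is_sheafification (P : presheaf) (S : sheaf) (eta : pmorph P S) : Prop :=
  forall (G : sheaf) (phi : pmorph P G),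
    exists psi : pmorph S G,
      (forall U (x : sec P U), mapp psi (mapp eta x) = mapp phi x) /\
      forall psi' : pmorph S G,
        (forall U (x : sec P U), mapp psi' (mapp eta x) = mapp phi x) ->
        forall U (y : sec S U), mapp psi' y = mapp psi y.

(* H^1_ct(X; F) = R^1 Gamma(F) = 0, computed via an injective resolution
   0 -> F -> I^0 -> I^1 -> ...: with Q = coker(F -> I^0) (the image of I^0 in
   I^1), R^1 Gamma(F) = coker(Gamma(I^0) -> Gamma(Q)).  We require this for
   every short exact sequence 0 -> F -> I -> Q -> 0 of sheaves with I injective
   (the value is independent of the choice). *)
Definition H1ct_vanishes (F : sheaf) : Prop :=
  forall (I Q : sheaf) (i : pmorph F I) (p : pmorph I Q),
    sheaf_injective I ->
    mono i ->
    (forall U (t : sec I U), mapp p t = 0 <-> exists s : sec F U, mapp i s = t) ->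
    sheaf_epi p ->
    forall q : sec Q setX, exists t : sec I setX, mapp p t = q.

(* Main.v *)
Require Import Defs.
From HB Require Import structures.
From mathcomp Require Import all_boot all_algebra.
From mathcomp Require Import zify.
From mathcomp Require Import boolp.
From Stdlib Require List.
Set Implicit Arguments. Unset Strict Implicit. Unset Printing Implicit Defensive.
Import GRing.Theory.
Local Open Scope ring_scope.

Lemma nnpp (P : Prop) : ~ ~ P -> P.
Proof. by case: (pselect P) => // h /(_ h). Qed.

Section Basic.
Variable F : presheaf.
Implicit Types U V W : subset_of.

Lemma res_irr U V (h1 h2 : incl V U) (x : sec F U) : res h1 x = res h2 x.
Proof. by rewrite -(res_comp h1 (fun _ hx => hx) h2 x) res_id. Qed.

Lemma res0 U V (h : incl V U) : res h (0 : sec F U) = 0.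
Proof. by have := @res_sub F _ _ h 0 0; rewrite !subrr. Qed.

Lemma resN U V (h : incl V U) (x : sec F U) : res h (- x) = - res h x.
Proof. by have := @res_sub F _ _ h 0 x; rewrite !sub0r res0 sub0r. Qed.

Lemma resD U V (h : incl V U) (x y : sec F U) : res h (x + y) = res h x + res h y.
Proof. by have := @res_sub F _ _ h x (- y); rewrite opprK resN opprK. Qed.

Lemma resB U V (h : incl V U) (x y : sec F U) : res h (x - y) = res h x - res h y.
Proof. exact: res_sub. Qed.

Lemma resK U V W (h1 : incl V U) (h2 : incl W V) (x : sec F U) :
  res h2 (res h1 x) = res (fun z hz => h1 z (h2 z hz)) x.
Proof. exact: res_comp. Qed.
End Basic.

Section BasicM.
Variables F G : presheaf.
Variable f : pmorph F G.
Lemma mapp0 U : mapp f (0 : sec F U) = 0.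
Proof. by have := mapp_sub f (0 : sec F U) 0; rewrite !subrr. Qed.
Lemma mappN U (x : sec F U) : mapp f (- x) = - mapp f x.
Proof. by have := mapp_sub f 0 x; rewrite !sub0r mapp0 sub0r. Qed.
Lemma mappD U (x y : sec F U) : mapp f (x + y) = mapp f x + mapp f y.
Proof. by have := mapp_sub f x (- y); rewrite opprK mappN opprK. Qed.
Lemma mappB U (x y : sec F U) : mapp f (x - y) = mapp f x - mapp f y.
Proof. exact: mapp_sub. Qed.
End BasicM.

Definition set0' : subset_of := fun _ => False.

Lemma bounded_sub (S T : subset_of) : incl S T -> bounded T -> bounded S.
Proof. by move=> hST [M hM]; exists M => x /hST /hM. Qed.

Lemma bounded_le N : bounded (fun x => (x <= N)%N).
Proof. by exists N. Qed.

Lemma ex_bound_list (A : Type) (s : seq A) (Q : A -> nat -> Prop) :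
  (forall a, List.In a s -> exists M, forall x, (M < x)%N -> Q a x) ->
  exists M, forall a, List.In a s -> forall x, (M < x)%N -> Q a x.
Proof.
elim: s => [|a s IH] H; first by exists 0%N.
have [M1 H1] := H a (or_introl erefl).
have [M2 H2] := IH (fun b hb => H b (or_intror hb)).
exists (maxn M1 M2) => b [<-|hb] x hx.
  by apply: H1; apply: leq_ltn_trans hx; exact: leq_maxl.
by apply: H2 => //; apply: leq_ltn_trans hx; exact: leq_maxr.
Qed.

Lemma ex_bound_lt (n : nat) (Q : nat -> nat -> Prop) :
  (forall j, (j < n)%N -> exists M, forall x, (M < x)%N -> Q j x) ->
  exists M, forall j, (j < n)%N -> forall x, (M < x)%N -> Q j x.
Proof.
elim: n => [|n IH] H; first by exists 0%N.
have [M1 H1] := H n (ltnSn n).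
have [M2 H2] := IH (fun j hj => H j (ltnW (leq_trans hj (leqnn _)))).
exists (maxn M1 M2) => j; rewrite ltnS leq_eqVlt => /orP [/eqP ->|hj] x hx.
  by apply: H1; apply: leq_ltn_trans hx; exact: leq_maxl.
by apply: H2 => //; apply: leq_ltn_trans hx; exact: leq_maxr.
Qed.

Lemma dist_sym x y : dist x y = dist y x.
Proof. by rewrite /dist addnC. Qed.
Lemma dist0 x : dist x x = 0%N.
Proof. by rewrite /dist subnn. Qed.

Lemma In_map (A B : Type) (f : A -> B) s a : List.In a s -> List.In (f a) (map f s).
Proof. elim: s => [|b s IH] //= [->|h]; [by left|by right; apply: IH]. Qed.

Lemma In_mapP (A B : Type) (f : A -> B) s b : List.In b (map f s) ->
  exists a, f a = b /\ List.In a s.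
Proof.
elim: s => [|a s IH] //= [<-|/IH [c [e h]]]; first by exists a; split=> //; left.
by exists c; split=> //; right.
Qed.

Lemma In_cat (A : Type) (s t : seq A) a : List.In a (s ++ t) <-> List.In a s \/ List.In a t.
Proof.
elim: s => [|b s IH] /=; first by split=> [h|[[]|h]]; [right|].
split; first by case=> [->|/IH [h|h]]; [left; left|left; right|right].
by case=> [[->|h]|h]; [left|right; apply/IH; left|right; apply/IH; right].
Qed.

Definition covl (U : subset_of) (s : seq subset_of) : Prop :=
  (forall V, List.In V s -> incl V U) /\
  forall R : nat, bounded (fun x => U x /\ forall V, List.In V s ->
                     dist_le x (fun y => U y /\ ~ V y) R).

Definition deep (U : subset_of) (s : seq subset_of) : Prop :=
  forall R : nat, exists M, forall x, (M < x)%N -> U x ->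
    exists V, List.In V s /\ forall y, U y -> (dist x y <= R)%N -> V y.

Lemma covl_deep U s : covl U s -> deep U s.
Proof.
move=> [_ H] R; have [M HM] := H R; exists M => x hx hU.
apply: nnpp => hn.
have : (x <= M)%N.
  apply: HM; split=> // V hV; apply: nnpp => hd; apply: hn; exists V; split=> //.
  move=> y hy hxy; apply: nnpp => hVy; apply: hd; exists y; split => //.
by rewrite leqNgt hx.
Qed.

Lemma deep_covl U s : (forall V, List.In V s -> incl V U) -> deep U s -> covl U s.
Proof.
move=> hs H; split=> // R; have [M HM] := H R; exists M => x [hU hall].
rewrite leqNgt; apply/negP => hx.
have [V [hV hball]] := HM x hx hU.
have [y [[hUy hVy] hxy]] := hall V hV.
exact: hVy (hball y hUy hxy).
Qed.

Lemma covl_sub U s : covl U s -> forall V, List.In V s -> incl V U.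
Proof. by case. Qed.

Lemma covl_ext U U' s : (forall x, U x <-> U' x) -> covl U s -> covl U' s.
Proof.
move=> e hc; apply: deep_covl.
  by move=> V hV x /(covl_sub hc hV) /e.
move=> R; have [M HM] := covl_deep hc R; exists M => x hx /e hU.
have [V [hV hb]] := HM x hx hU; exists V; split=> // y /e; exact: hb.
Qed.

Lemma covl_single U : covl U [:: U].
Proof.
apply: deep_covl; first by move=> V [<-|[]].
by move=> R; exists 0%N => x _ _; exists U; split=> //; left.
Qed.

Lemma covl_nil U : bounded U -> covl U [::].
Proof.
move=> [M hM]; apply: deep_covl => // R; exists M => x hx /hM.
by rewrite leqNgt hx.
Qed.

Lemma covl_restr U s W : covl U s -> incl W U ->
  covl W (map (fun V => inter V W) s).
Proof.
move=> hc hWU; apply: deep_covl.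
  move=> V hV; have [V' [<- _]] := In_mapP hV; by move=> x [].
move=> R; have [M HM] := covl_deep hc R; exists M => x hx hW.
have [V [hV hb]] := HM x hx (hWU x hW).
exists (inter V W); split; first by apply: In_map.
by move=> y hy hxy; split=> //; apply: hb => //; apply: hWU.
Qed.

Lemma In_allpairs (A B C : Type) (f : A -> B -> C) s t a b :
  List.In a s -> List.In b t -> List.In (f a b) [seq f x y | x <- s, y <- t].
Proof.
elim: s => [|a' s IH] //= ha hb; rewrite In_cat.
case: ha => [->|ha]; first by left; apply: In_map.
by right; apply: IH.
Qed.

Lemma In_allpairsP (A B C : Type) (f : A -> B -> C) s t c :
  List.In c [seq f x y | x <- s, y <- t] ->
  exists a b, [/\ List.In a s, List.In b t & c = f a b].
Proof.
elim: s => [|a' s IH] //=; rewrite In_cat => [[]].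
  by move=> h; have [b [<- hb]] := In_mapP h; exists a', b; split=> //; left.
by move=> h; have [a [b [ha hb ->]]] := IH h; exists a, b; split=> //; right.
Qed.

Lemma covl_refine U s t : covl U s -> covl U t ->
  covl U [seq inter a b | a <- s, b <- t].
Proof.
move=> hs ht; apply: deep_covl.
  move=> V hV; have [a [b [ha hb ->]]] := In_allpairsP hV; by move=> x [/(covl_sub hs ha)].
move=> R; have [M1 H1] := covl_deep hs R; have [M2 H2] := covl_deep ht R.
exists (maxn M1 M2) => x hx hU.
have [a [ha hba]] := H1 x (leq_ltn_trans (leq_maxl _ _) hx) hU.
have [b [hb hbb]] := H2 x (leq_ltn_trans (leq_maxr _ _) hx) hU.
exists (inter a b); split; first exact: In_allpairs.
by move=> y hy hxy; split; [apply: hba|apply: hbb].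
Qed.

Lemma covl_trans U s f : covl U s ->
  (forall V, List.In V s -> exists t, covl V t /\ forall W, List.In W t -> List.In W f) ->
  (forall W, List.In W f -> incl W U) -> covl U f.
Proof.
move=> hs ht hf; apply: deep_covl => // R.
have [M0 H0] := covl_deep hs R.
have [M1 H1] := ex_bound_list (Q := fun V x => V x -> exists W, List.In W f /\
       forall y, V y -> (dist x y <= R)%N -> W y) (s := s)
   (fun V hV => let: ex_intro t (conj htc htf) := ht V hV in
     let: ex_intro M HM := covl_deep htc R in
     ex_intro _ M (fun x hx hVx => let: ex_intro W (conj hW hb) := HM x hx hVx in
        ex_intro _ W (conj (htf W hW) hb))).
exists (maxn M0 M1) => x hx hU.
have [V [hV hbV]] := H0 x (leq_ltn_trans (leq_maxl _ _) hx) hU.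
have hVx : V x by apply: hbV => //; rewrite dist0.
have [W [hW hbW]] := H1 V hV x (leq_ltn_trans (leq_maxr _ _) hx) hVx.
by exists W; split=> // y hy hxy; apply: hbW => //; apply: hbV.
Qed.

Lemma InP (T : eqType) (x : T) s : List.In x s <-> x \in s.
Proof.
elim: s => [|a s IH] //=; rewrite in_cons; split.
  by case=> [->|/IH ->]; rewrite ?eqxx ?orbT.
by case/orP=> [/eqP ->|/IH]; [left|right].
Qed.

Lemma In_nth (T : Type) (d : T) s a : List.In a s ->
  exists i, (i < size s)%N /\ nth d s i = a.
Proof.
elim: s => [|b s IH] //= [->|/IH [i [hi <-]]]; first by exists 0%N.
by exists i.+1.
Qed.

Lemma nth_In (T : Type) (d : T) s i : (i < size s)%N -> List.In (nth d s i) s.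
Proof.
elim: s i => [|b s IH] [|i] //= hi; first by left.
by right; apply: IH.
Qed.

Lemma cc_covl U n (V : 'I_n -> subset_of) : coarse_cover U V ->
  covl U (map V (enum 'I_n)).
Proof.
move=> [hV hR]; split.
  move=> W hW; have [i [<- _]] := In_mapP hW; exact: hV.
move=> R; apply: bounded_sub (hR R) => x [hx hall]; split=> // i.
by apply: hall; apply: In_map; apply/InP; rewrite mem_enum.
Qed.

Lemma covl_cc U s : covl U s ->
  coarse_cover U (fun i : 'I_(size s) => nth set0' s i).
Proof.
move=> [hV hR]; split.
  by move=> i; apply: hV; apply: nth_In.
move=> R; apply: bounded_sub (hR R) => x [hx hall]; split=> // V hVs.
have [i [hi <-]] := In_nth set0' hVs.
exact: (hall (Ordinal hi)).
Qed.

Lemma covl_cc_gen U s n (V : 'I_n -> subset_of) :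
  (forall i, List.In (V i) s) -> (forall W, List.In W s -> exists i, V i = W) ->
  covl U s -> coarse_cover U V.
Proof.
move=> h1 h2 [hV hR]; split; first by move=> i; apply: hV.
move=> R; apply: bounded_sub (hR R) => x [hx hall]; split=> // W hW.
by have [i <-] := h2 W hW; apply: hall.
Qed.

Section SheafL.
Variable G : sheaf.

Lemma sec_bounded U : bounded U -> forall x y : sec G U, x = y.
Proof.
move=> hb x y.
have hV : forall i : 'I_0, incl ((fun _ => U) i) U by move=> i z.
have cc : coarse_cover U (fun _ : 'I_0 => U).
  split=> // R; apply: bounded_sub hb => z []; done.
have [hs _] := sh_sheaf G hV cc.
by apply: hs => -[i hi]; exfalso; move: hi; rewrite ltn0.
Qed.

Lemma sep_l U s : covl U s -> forall x y : sec G U,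
  (forall V (h : incl V U), List.In V s -> res h x = res h y) -> x = y.
Proof.
move=> hc x y H.
have cc := covl_cc hc.
have hV : forall i : 'I_(size s), incl (nth set0' s i) U.
  by move=> i; apply: (covl_sub hc); apply: nth_In.
have [hs _] := sh_sheaf G hV cc.
by apply: hs => i; apply: H; apply: nth_In.
Qed.

Definition dpair := {V : subset_of & sec G V}.
Definition dflt : dpair := existT (fun V => sec G V) set0' 0.

Lemma glue_l U (l : seq dpair) : covl U (map (@projT1 _ _) l) ->
  (forall a b, List.In a l -> List.In b l ->
     res (@incl_interl (projT1 a) (projT1 b)) (projT2 a) =
     res (@incl_interr (projT1 a) (projT1 b)) (projT2 b)) ->
  exists g : sec G U, forall a (h : incl (projT1 a) U), List.In a l -> res h g = projT2 a.
Proof.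
move=> hc hcomp.
pose V := fun i : 'I_(size l) => projT1 (nth dflt l i).
have cc : coarse_cover U V.
  apply: covl_cc_gen hc; first by move=> i; apply: In_map; apply: nth_In.
  move=> W hW; have [a [<- ha]] := In_mapP hW.
  by have [i [hi <-]] := In_nth dflt ha; exists (Ordinal hi).
have hV : forall i, incl (V i) U.
  by move=> i; apply: (covl_sub hc); apply: In_map; apply: nth_In.
have [_ hg] := sh_sheaf G hV cc.
have [g Hg] := hg (fun i => projT2 (nth dflt l i))
   (fun i j => hcomp _ _ (nth_In dflt (ltn_ord i)) (nth_In dflt (ltn_ord j))).
exists g => a h ha.
have [i [hi ei]] := In_nth dflt ha.
move: h; rewrite -ei => h.
rewrite (res_irr h (hV (Ordinal hi))); exact: (Hg (Ordinal hi)).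
Qed.
End SheafL.

Lemma covl_superset U s s' : covl U s -> (forall V, List.In V s -> List.In V s') ->
  (forall V, List.In V s' -> incl V U) -> covl U s'.
Proof.
move=> hc hss hs'; apply: deep_covl => // R.
have [M HM] := covl_deep hc R; exists M => x hx hU.
have [V [hV hb]] := HM x hx hU; exists V; split=> //; exact: hss.
Qed.

Lemma In_flatten (A : Type) (ss : seq (seq A)) a :
  List.In a (flatten ss) <-> exists s, List.In s ss /\ List.In a s.
Proof.
elim: ss => [|s ss IH] /=; first by split=> [[]|[s [[]]]].
rewrite In_cat; split.
  by case=> [h|/IH [t [ht ha]]]; [exists s; split=> //; left|exists t; split=> //; right].
by case=> t [[<-|ht] ha]; [left|right; apply/IH; exists t].
Qed.

Unset Implicit Arguments.

Ltac incl_tac := let z := fresh "z" in let hz := fresh "hz" in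
  intros z hz;
  repeat match goal with
  | H : incl ?A ?B |- _ =>
      let h := fresh "hi" in
      (assert (h : B z) by (apply H; clear -hz; simpl in *; unfold inter in *; simpl in *; tauto)); clear H
  | H : incl ?A ?B |- _ => clear H
  end;
  simpl in *; unfold inter in *; simpl in *; tauto.

Record Lprops (G : sheaf) (L : forall W, sec G W -> Prop) := {
  L0 : forall W, L W 0;
  LB : forall W x y, L W x -> L W y -> L W (x - y);
  LR : forall W W' (h : incl W' W) x, L W x -> L W' (res h x);
  LL : forall W s x, covl W s ->
        (forall V (h : incl V W), List.In V s -> L V (res h x)) -> L W x }.
Arguments Lprops {G} L.
Arguments L0 {G L} _ W.
Arguments LB {G L} _ {W} x y.
Arguments LR {G L} _ {W W'} h x.
Arguments LL {G L} _ {W s x}.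

Section Quot.
Variables (G : sheaf) (L : forall W, sec G W -> Prop) (HL : Lprops L).
Local Notation dp := (dpair G).

Lemma LN W x : L W x -> L W (- x).
Proof. by move=> h; rewrite -sub0r; apply: (LB HL) => //; apply: (L0 HL). Qed.
Lemma LD W x y : L W x -> L W y -> L W (x + y).
Proof. by move=> hx hy; rewrite -[y]opprK; apply: (LB HL) => //; apply: LN. Qed.
Lemma Leq W x y : x = y -> L W x -> L W y.
Proof. by move=> ->. Qed.

Definition rs (Y : subset_of) (a : dp) : sec G Y :=
  match pselect (incl Y (projT1 a)) with
  | left h => res h (projT2 a) | right _ => 0 end.

Lemma rsE Y (a : dp) (h : incl Y (projT1 a)) : res h (projT2 a) = rs Y a.
Proof. by rewrite /rs; case: pselect => // h'; rewrite (res_irr h h'). Qed.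

Lemma rs_mk Y W (x : sec G W) (h : incl Y W) :
  rs Y (existT _ W x) = res h x.
Proof. by rewrite -(rsE Y (existT _ W x) h). Qed.

Definition compat (a b : dp) := forall Y, incl Y (projT1 a) -> incl Y (projT1 b) ->
  L Y (rs Y a - rs Y b).

Lemma compat_refl a : compat a a.
Proof. by move=> Y _ _; rewrite subrr; apply: (L0 HL). Qed.

Lemma compat_sym a b : compat a b -> compat b a.
Proof. by move=> h Y hb ha; rewrite -opprB; apply: LN; apply: h. Qed.

Record Fam (W : subset_of) := MkFam {
  fl : seq dp;
  fcov : covl W (map (@projT1 _ _) fl);
  fcomp : forall a b, List.In a fl -> List.In b fl -> compat a b }.

Arguments fl {W}. Arguments fcov {W}. Arguments fcomp {W}. Arguments MkFam {W}.

Lemma rs_res Y V (a : dp) (hY : incl Y (projT1 a)) (h : incl V Y) :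
  res h (rs Y a) = rs V a.
Proof. by rewrite -(rsE Y a hY) resK rsE. Qed.

Lemma subr_trans (Z : zmodType) (x y z : Z) : (x - y) + (y - z) = x - z.
Proof. by rewrite addrA subrK. Qed.

Lemma fsub W (p : Fam W) a : List.In a (fl p) -> incl (projT1 a) W.
Proof. by move=> ha; apply: (covl_sub (fcov p)); apply: In_map. Qed.

Definition eqv W (p q : Fam W) :=
  forall a b, List.In a (fl p) -> List.In b (fl q) -> compat a b.

Lemma eqv_refl W (p : Fam W) : eqv W p p.
Proof. exact: fcomp. Qed.

Lemma eqv_sym W (p q : Fam W) : eqv W p q -> eqv W q p.
Proof. by move=> h a b ha hb; apply: compat_sym; apply: h. Qed.

Lemma eqv_trans W (p q r : Fam W) : eqv W p q -> eqv W q r -> eqv W p r.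
Proof.
move=> hpq hqr a c ha hc Y hYa hYc.
have hYW : incl Y W by move=> z /hYa; apply: (fsub W p a ha).
apply: (LL HL (covl_restr (fcov q) hYW)) => V h hV.
have [B [eB hB]] := In_mapP hV.
have [b [eb hb]] := In_mapP hB.
rewrite resB !rs_res //.
have hVb : incl V (projT1 b) by rewrite eb -eB => z [].
apply: (Leq V _ _ (subr_trans _ _ (rs V b) _)); apply: LD.
  by apply: (hpq a b ha hb); [move=> z /h /hYa|].
by apply: (hqr b c hb hc) => // z /h /hYc.
Qed.

Definition popp (a : dp) : dp := existT _ (projT1 a) (- projT2 a).
Definition padd (a b : dp) : dp := existT _ (inter (projT1 a) (projT1 b))
  (res (@incl_interl _ _) (projT2 a) + res (@incl_interr _ _) (projT2 b)).
Definition pres (W' : subset_of) (a : dp) : dp :=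
  existT _ (inter (projT1 a) W') (res (@incl_interl _ _) (projT2 a)).

Lemma rs_popp Y a : incl Y (projT1 a) -> rs Y (popp a) = - rs Y a.
Proof. by move=> h; rewrite -(rsE Y (popp a) h) -(rsE Y a h) /= resN. Qed.

Lemma rs_padd Y a b : incl Y (projT1 a) -> incl Y (projT1 b) ->
  rs Y (padd a b) = rs Y a + rs Y b.
Proof.
move=> ha hb; have h : incl Y (projT1 (padd a b)) by incl_tac.
by rewrite -(rsE Y (padd a b) h) /= resD !resK !rsE.
Qed.

Lemma rs_pres Y W' a : incl Y (projT1 a) -> incl Y W' -> rs Y (pres W' a) = rs Y a.
Proof.
move=> ha hb; have h : incl Y (projT1 (pres W' a)) by incl_tac.
by rewrite -(rsE Y (pres W' a) h) /= resK rsE.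
Qed.

Lemma addsub4 (Z : zmodType) (x y x' y' : Z) : (x + y) - (x' + y') = (x - x') + (y - y').
Proof. by rewrite opprD addrACA. Qed.

Definition fzero W : Fam W.
Proof.
refine (MkFam [:: existT (fun V => sec G V) W (0 : sec G W)] (covl_single W) _).
by move=> a b [<-|[]] [<-|[]]; apply: compat_refl.
Defined.

Definition fopp W (p : Fam W) : Fam W.
Proof.
refine (MkFam (map popp (fl p)) _ _).
  apply: (covl_superset (fcov p)).
    move=> V hV; have [a [<- ha]] := In_mapP hV.
    exact: (In_map (@projT1 _ _) (In_map popp ha)).
  move=> V hV; have [a' [<- ha']] := In_mapP hV; have [a [<- ha]] := In_mapP ha'.
  exact: (fsub W p a ha).
move=> a' b' ha' hb'; have [a [<- ha]] := In_mapP ha'; have [b [<- hb]] := In_mapP hb'.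
move=> Y hA hB; rewrite !rs_popp // opprK addrC.
exact: (compat_sym _ _ (fcomp p a b ha hb)).
Defined.

Definition fadd W (p q : Fam W) : Fam W.
Proof.
refine (MkFam [seq padd a b | a <- fl p, b <- fl q] _ _).
  apply: (covl_superset (covl_refine (fcov p) (fcov q))).
    move=> V hV; have [x [y [hx hy ->]]] := In_allpairsP hV.
    have [a [<- ha]] := In_mapP hx; have [b [<- hb]] := In_mapP hy.
    exact: (In_map (@projT1 _ _) (In_allpairs padd ha hb)).
  move=> V hV; have [c [<- hc]] := In_mapP hV; have [a [b [ha hb ->]]] := In_allpairsP hc.
  by move=> z [/(fsub W p a ha)].
move=> c c' hc hc'.
have [a [b [ha hb ->]]] := In_allpairsP hc; have [a' [b' [ha' hb' ->]]] := In_allpairsP hc'.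
move=> Y hA hB; rewrite !rs_padd; try incl_tac.
rewrite addsub4; apply: LD.
  by apply: (fcomp p a a' ha ha'); incl_tac.
by apply: (fcomp q b b' hb hb'); incl_tac.
Defined.

Definition fres W W' (h : incl W' W) (p : Fam W) : Fam W'.
Proof.
refine (MkFam (map (pres W') (fl p)) _ _).
  apply: (covl_superset (covl_restr (fcov p) h)).
    move=> V hV; have [B [<- hB]] := In_mapP hV; have [a [<- ha]] := In_mapP hB.
    exact: (In_map (@projT1 _ _) (In_map (pres W') ha)).
  move=> V hV; have [a' [<- ha']] := In_mapP hV; have [a [<- ha]] := In_mapP ha'.
  by move=> z [].
move=> a' b' ha' hb'; have [a [<- ha]] := In_mapP ha'; have [b [<- hb]] := In_mapP hb'.
move=> Y hA hB; rewrite !rs_pres; try incl_tac.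
by apply: (fcomp p a b ha hb); incl_tac.
Defined.

Lemma fadd_eqv W p p' q q' : eqv W p p' -> eqv W q q' -> eqv W (fadd W p q) (fadd W p' q').
Proof.
move=> hp hq c c' hc hc'.
have [a [b [ha hb ->]]] := In_allpairsP hc; have [a' [b' [ha' hb' ->]]] := In_allpairsP hc'.
move=> Y hA hB; rewrite !rs_padd; try incl_tac.
rewrite addsub4; apply: LD.
  by apply: (hp a a' ha ha'); incl_tac.
by apply: (hq b b' hb hb'); incl_tac.
Qed.

Lemma fopp_eqv W p p' : eqv W p p' -> eqv W (fopp W p) (fopp W p').
Proof.
move=> hp a' b' ha' hb'; have [a [<- ha]] := In_mapP ha'; have [b [<- hb]] := In_mapP hb'.
move=> Y hA hB; rewrite !rs_popp // -opprD; apply: LN; exact: hp.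
Qed.

Lemma fres_eqv W W' (h : incl W' W) p p' : eqv W p p' -> eqv W' (fres W W' h p) (fres W W' h p').
Proof.
move=> hp a' b' ha' hb'; have [a [<- ha]] := In_mapP ha'; have [b [<- hb]] := In_mapP hb'.
move=> Y hA hB; rewrite !rs_pres; try incl_tac.
by apply: (hp a b ha hb); incl_tac.
Qed.

Lemma fadd_assoc W p q r : eqv W (fadd W (fadd W p q) r) (fadd W p (fadd W q r)).
Proof.
move=> c c' hc hc'.
have [d [e [hd he ->]]] := In_allpairsP hc; have [a [b [ha hb ->]]] := In_allpairsP hd.
have [a' [d' [ha' hd' ->]]] := In_allpairsP hc'; have [b' [e' [hb' he' ->]]] := In_allpairsP hd'.
move=> Y hA hB; rewrite !rs_padd; try incl_tac.
rewrite [rs Y a' + _]addrA addsub4; apply: LD; last by apply: (fcomp r); try incl_tac.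
rewrite addsub4; apply: LD; first by apply: (fcomp p); try incl_tac.
by apply: (fcomp q); try incl_tac.
Qed.

Lemma fadd_comm W p q : eqv W (fadd W p q) (fadd W q p).
Proof.
move=> c c' hc hc'.
have [a [b [ha hb ->]]] := In_allpairsP hc; have [b' [a' [hb' ha' ->]]] := In_allpairsP hc'.
move=> Y hA hB; rewrite !rs_padd; try incl_tac.
rewrite [rs Y b' + _]addrC addsub4; apply: LD.
  by apply: (fcomp p); try incl_tac.
by apply: (fcomp q); try incl_tac.
Qed.

Lemma fadd_0 W p : eqv W (fadd W (fzero W) p) p.
Proof.
move=> c a' hc ha'.
have [z [a [[<-|[]] ha ->]]] := In_allpairsP hc.
move=> Y hA hB; rewrite !rs_padd; try incl_tac.
have hY : incl Y W by incl_tac.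
rewrite (rs_mk _ _ _ hY) res0 add0r.
by apply: (fcomp p); try incl_tac.
Qed.

Lemma fadd_N W p : eqv W (fadd W (fopp W p) p) (fzero W).
Proof.
move=> c z hc [<-|[]].
have [a' [b [ha' hb ->]]] := In_allpairsP hc; have [a [<- ha]] := In_mapP ha'.
move=> Y hA hB; rewrite !rs_padd; try incl_tac.
rewrite rs_popp; last incl_tac.
rewrite (rs_mk _ _ _ hB) res0 subr0 addrC.
by apply: (fcomp p); try incl_tac.
Qed.

Lemma fres_add W W' (h : incl W' W) p q :
  eqv W' (fres W W' h (fadd W p q)) (fadd W' (fres W W' h p) (fres W W' h q)).
Proof.
move=> c c' hc hc'.
have [d [<- hd]] := In_mapP hc; have [a [b [ha hb ->]]] := In_allpairsP hd.
have [x [y [hx hy ->]]] := In_allpairsP hc'.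
have [a' [<- ha']] := In_mapP hx; have [b' [<- hb']] := In_mapP hy.
move=> Y hA hB; rewrite !rs_pres; try incl_tac. rewrite !rs_padd; try incl_tac.
rewrite !rs_pres; try incl_tac.
rewrite addsub4; apply: LD.
  by apply: (fcomp p); try incl_tac.
by apply: (fcomp q); try incl_tac.
Qed.

Lemma fres_opp W W' (h : incl W' W) p :
  eqv W' (fres W W' h (fopp W p)) (fopp W' (fres W W' h p)).
Proof.
move=> c c' hc hc'.
have [d [<- hd]] := In_mapP hc; have [a [<- ha]] := In_mapP hd.
have [x [<- hx]] := In_mapP hc'; have [b [<- hb]] := In_mapP hx.
move=> Y hA hB; rewrite !rs_pres; try incl_tac. rewrite !rs_popp; try incl_tac.
rewrite !rs_pres; try incl_tac.
rewrite -opprD; apply: LN; by apply: (fcomp p); try incl_tac.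
Qed.

Lemma fres_id W (h : incl W W) p : eqv W (fres W W h p) p.
Proof.
move=> c b hc hb; have [a [<- ha]] := In_mapP hc.
move=> Y hA hB; rewrite !rs_pres; try incl_tac.
by apply: (fcomp p); try incl_tac.
Qed.

Lemma fres_comp U V W (hVU : incl V U) (hWV : incl W V) (hWU : incl W U) p :
  eqv W (fres V W hWV (fres U V hVU p)) (fres U W hWU p).
Proof.
move=> c c' hc hc'.
have [d [<- hd]] := In_mapP hc; have [a [<- ha]] := In_mapP hd.
have [b [<- hb]] := In_mapP hc'.
move=> Y hA hB; rewrite !rs_pres; try incl_tac.
by apply: (fcomp p); try incl_tac.
Qed.

Lemma pick_ext (T : Type) (P Q : T -> Prop) (hP : exists x, P x) (hQ : exists x, Q x) :
  P = Q -> proj1_sig (cid hP) = proj1_sig (cid hQ).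
Proof. by move=> E; subst Q; rewrite (Prop_irrelevance hP hQ). Qed.

Definition canon W (p : Fam W) : Fam W :=
  proj1_sig (cid (ex_intro (fun q => eqv W q p) p (eqv_refl W p))).

Lemma canon_eqv W p : eqv W (canon W p) p.
Proof. by rewrite /canon; case: (cid _). Qed.

Lemma canon_eq W p p' : eqv W p p' -> canon W p = canon W p'.
Proof.
move=> h; apply: pick_ext; apply: funext => q; apply: propext; split => hq.
  exact: eqv_trans hq h.
exact: eqv_trans hq (eqv_sym _ _ _ h).
Qed.

Definition Hty W := let _ := HL in {p : Fam W | canon W p = p}.

Definition mkH W (p : Fam W) : Hty W :=
  exist _ (canon W p) (canon_eq W _ _ (canon_eqv W p)).

Lemma H_eq W (x y : Hty W) : eqv W (proj1_sig x) (proj1_sig y) -> x = y.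
Proof.
case: x => p hp; case: y => q hq /= h.
have e : p = q by rewrite -hp -hq; apply: canon_eq.
subst q; congr exist; exact: Prop_irrelevance.
Qed.

Lemma mkH_eqv W p : eqv W (proj1_sig (mkH W p)) p.
Proof. exact: canon_eqv. Qed.

Lemma mkH_eq W p q : eqv W p q -> mkH W p = mkH W q.
Proof.
by move=> h; apply: H_eq; apply: (eqv_trans _ _ _ _ (mkH_eqv W p));
  apply: (eqv_trans _ _ _ _ h); apply: eqv_sym; apply: mkH_eqv.
Qed.

Lemma mkH_val W (x : Hty W) : mkH W (proj1_sig x) = x.
Proof. by apply: H_eq; apply: mkH_eqv. Qed.

Lemma mkH_inj W p q : mkH W p = mkH W q -> eqv W p q.
Proof.
move=> e; apply: (eqv_trans _ _ _ _ (eqv_sym _ _ _ (mkH_eqv W p))).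
by rewrite e; apply: mkH_eqv.
Qed.

Definition Hzero W : Hty W := mkH W (fzero W).
Definition Hopp W (x : Hty W) : Hty W := mkH W (fopp W (proj1_sig x)).
Definition Hadd W (x y : Hty W) : Hty W := mkH W (fadd W (proj1_sig x) (proj1_sig y)).

Lemma HaddA W : associative (Hadd W).
Proof.
move=> x y z; rewrite /Hadd; apply: mkH_eq.
apply: (eqv_trans _ _ _ _ (fadd_eqv _ _ _ _ _ (eqv_refl _ _) (mkH_eqv _ _))).
apply: (eqv_trans _ _ _ _ (eqv_sym _ _ _ (fadd_assoc _ _ _ _))).
apply: fadd_eqv; last exact: eqv_refl.
exact: eqv_sym _ _ _ (mkH_eqv _ _).
Qed.

Lemma HaddC W : commutative (Hadd W).
Proof. by move=> x y; apply: mkH_eq; apply: fadd_comm. Qed.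

Lemma Hadd0 W : left_id (Hzero W) (Hadd W).
Proof.
move=> x; rewrite /Hadd -[RHS]mkH_val; apply: mkH_eq.
apply: (eqv_trans _ _ _ _ (fadd_eqv _ _ _ _ _ (mkH_eqv _ _) (eqv_refl _ _))).
exact: fadd_0.
Qed.

Lemma HaddN W : left_inverse (Hzero W) (Hopp W) (Hadd W).
Proof.
move=> x; rewrite /Hadd /Hopp; apply: mkH_eq.
apply: (eqv_trans _ _ _ _ (fadd_eqv _ _ _ _ _ (mkH_eqv _ _) (eqv_refl _ _))).
exact: fadd_N.
Qed.

HB.instance Definition _ W := gen_eqMixin (Hty W).
HB.instance Definition _ W := gen_choiceMixin (Hty W).
HB.instance Definition _ W :=
  GRing.isZmodule.Build (Hty W) (@HaddA W) (@HaddC W) (@Hadd0 W) (@HaddN W).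

Lemma HaddE W (x y : Hty W) : x + y = Hadd W x y. Proof. by []. Qed.
Lemma HoppE W (x : Hty W) : - x = Hopp W x. Proof. by []. Qed.
Lemma HzeroE W : (0 : Hty W) = Hzero W. Proof. by []. Qed.


Definition Hres U V (h : incl V U) (x : Hty U) : Hty V := mkH V (fres U V h (sval x)).

Tactic Notation "etr" uconstr(H) := refine (eqv_trans _ _ _ _ H _).

Lemma Hres_sub U V (h : incl V U) (x y : Hty U) : Hres U V h (x - y) = Hres U V h x - Hres U V h y.
Proof.
rewrite !HaddE !HoppE /Hadd /Hopp /Hres; apply: mkH_eq.
etr (fres_eqv _ _ h _ _ (mkH_eqv _ _)).
etr (fres_eqv _ _ h _ _ (fadd_eqv _ _ _ _ _ (eqv_refl _ _) (mkH_eqv _ _))).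
etr (fres_add _ _ h _ _).
apply: eqv_sym.
etr (fadd_eqv _ _ _ _ _ (mkH_eqv _ _) (mkH_eqv _ _)).
apply: fadd_eqv; first exact: eqv_refl.
etr (fopp_eqv _ _ _ (mkH_eqv _ _)).
exact: eqv_sym _ _ _ (fres_opp _ _ _ _).
Qed.

Lemma Hres_id U (h : incl U U) (x : Hty U) : Hres U U h x = x.
Proof. by rewrite /Hres -[RHS]mkH_val; apply: mkH_eq; apply: fres_id. Qed.

Lemma Hres_comp U V W (hVU : incl V U) (hWV : incl W V) (hWU : incl W U) (x : Hty U) :
  Hres V W hWV (Hres U V hVU x) = Hres U W hWU x.
Proof.
rewrite /Hres; apply: mkH_eq.
etr (fres_eqv _ _ hWV _ _ (mkH_eqv _ _)).
exact: fres_comp.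
Qed.

Definition Hpsh : presheaf :=
  @Presheaf (fun W => (Hty W : zmodType)) Hres Hres_sub Hres_id Hres_comp.

Lemma rs_res_mk Y W W' (h : incl W' W) (g : sec G W) : incl Y W' ->
  rs Y (existT _ W' (res h g)) = rs Y (existT _ W g).
Proof.
move=> hY; rewrite (rs_mk _ _ _ hY) resK.
by rewrite (rs_mk Y W g (fun z hz => h z (hY z hz))).
Qed.

Lemma Hsheaf : is_sheaf Hpsh.
Proof.
move=> U n V hV cc; split.
  move=> x y hxy; apply: H_eq => a b ha hb Y hA hB.
  have hYU : incl Y U by move=> z /hA; apply: (fsub _ _ a ha).
  apply: (LL HL (covl_restr (cc_covl cc) hYU)) => P hP hPin.
  have [Q [eQ hQ]] := In_mapP hPin; have [i [eV _]] := In_mapP hQ.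
  rewrite resB !rs_res //.
  have := mkH_inj _ _ _ (hxy i) (pres (V i) a) (pres (V i) b)
    (In_map _ ha) (In_map _ hb) P.
  rewrite -eQ -eV in hP *.
  rewrite !rs_pres; try incl_tac.
  by apply; incl_tac.
move=> t ht.
pose fl0 := flatten [seq fl (sval (t i)) | i <- enum 'I_n].
have memfl : forall a, List.In a fl0 -> exists i, List.In a (fl (sval (t i))).
  move=> a /In_flatten [l [hl ha]]; have [i [el _]] := In_mapP hl; by exists i; rewrite el.
have flmem : forall i a, List.In a (fl (sval (t i))) -> List.In a fl0.
  move=> i a ha; apply/In_flatten; exists (fl (sval (t i))); split=> //.
  by apply: In_map; apply/InP; rewrite mem_enum.
have hcomp : forall a b, List.In a fl0 -> List.In b fl0 -> compat a b.
  move=> a b /memfl [i ha] /memfl [j hb] Y hA hB.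
  have hYa : incl Y (projT1 a) := hA.
  have hYi : incl Y (V i) by move=> z /hA; apply: (fsub _ _ a ha).
  have hYj : incl Y (V j) by move=> z /hB; apply: (fsub _ _ b hb).
  have := mkH_inj _ _ _ (ht i j) (pres (inter (V i) (V j)) a) (pres (inter (V i) (V j)) b)
    (In_map _ ha) (In_map _ hb) Y.
  rewrite !rs_pres; try incl_tac.
  by apply; incl_tac.
have hcov : covl U (map (@projT1 _ _) fl0).
  apply: (covl_trans (cc_covl cc)).
    move=> W hW; have [i [<- _]] := In_mapP hW.
    exists (map (@projT1 _ _) (fl (sval (t i)))); split; first exact: fcov.
    by move=> W' hW'; have [a [<- ha]] := In_mapP hW'; apply: In_map; apply: flmem ha.
  move=> W hW; have [a [<- ha]] := In_mapP hW; have [i hai] := memfl a ha.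
  by move=> z /(fsub _ _ a hai) /(hV i).
exists (mkH U (MkFam fl0 hcov hcomp)) => i.
rewrite /= /Hres -[RHS]mkH_val; apply: mkH_eq.
etr (fres_eqv _ _ _ _ _ (mkH_eqv _ _)).
move=> c a hc ha; have [c' [<- hc']] := In_mapP hc.
move=> Y hA hB; rewrite rs_pres; try incl_tac.
by apply: (hcomp c' a hc' (flmem i a ha)); incl_tac.
Qed.

Definition Hsh : sheaf := Sheaf Hsheaf.

Definition single W (g : sec G W) : Fam W.
Proof.
refine (MkFam [:: existT (fun V => sec G V) W g] (covl_single W) _).
by move=> a b [<-|[]] [<-|[]]; apply: compat_refl.
Defined.

Lemma ap_sub W (x y : sec G W) :
  mkH W (single W (x - y)) = mkH W (single W x) - mkH W (single W y).
Proof.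
rewrite HaddE HoppE /Hadd /Hopp; apply: mkH_eq.
apply: eqv_sym.
etr (fadd_eqv _ _ _ _ _ (mkH_eqv _ _) (mkH_eqv _ _)).
etr (fadd_eqv _ _ _ _ _ (eqv_refl _ _) (fopp_eqv _ _ _ (mkH_eqv _ _))).
move=> c b hc [<-|[]].
have [a [a' [[<-|[]] ha' ->]]] := In_allpairsP hc; have [z [<- [<-|[]]]] := In_mapP ha'.
move=> Y hA hB; rewrite rs_padd; try incl_tac.
rewrite rs_popp; last incl_tac.
have hYW : incl Y W by incl_tac.
rewrite !(rs_mk _ _ _ hYW) resB subrr; exact: (L0 HL).
Qed.

Lemma ap_nat U V (h : incl V U) (g : sec G U) :
  mkH V (single V (res h g)) = Hres U V h (mkH U (single U g)).
Proof.
rewrite /Hres; apply: mkH_eq; apply: eqv_sym.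
etr (fres_eqv _ _ _ _ _ (mkH_eqv _ _)).
move=> c b hc [<-|[]]; have [a [<- [<-|[]]]] := In_mapP hc.
move=> Y hA hB; rewrite rs_pres; try incl_tac.
rewrite rs_res_mk; last incl_tac.
rewrite subrr; exact: (L0 HL).
Qed.

Definition ap : pmorph G Hpsh := @PMorph G Hpsh (fun W g => mkH W (single W g)) ap_sub ap_nat.

Lemma zm_sub W (x y : sec G W) : (0 : Hty W) = 0 - 0.
Proof. by rewrite subrr. Qed.
Lemma zm_nat U V (h : incl V U) (x : sec G U) : (0 : Hty V) = Hres U V h 0.
Proof. exact: (esym (@res0 Hpsh U V h)). Qed.

Definition zm : pmorph G Hpsh := @PMorph G Hpsh (fun W _ => 0) zm_sub zm_nat.

Lemma ap_zero W (g : sec G W) : mapp ap g = 0 -> L W g.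
Proof.
move=> /= e; rewrite HzeroE /Hzero in e.
have := mkH_inj _ _ _ e (existT (fun V => sec G V) W g) (existT (fun V => sec G V) W (0 : sec G W)) (or_introl erefl) (or_introl erefl) W
  (fun _ h => h) (fun _ h => h).
by rewrite !(rs_mk _ _ _ (fun _ h => h)) res_id res0 subr0.
Qed.

Lemma ap_L W (g : sec G W) : L W g -> mapp ap g = 0.
Proof.
move=> hg /=; rewrite HzeroE /Hzero; apply: mkH_eq.
move=> a b [<-|[]] [<-|[]] Y hA hB.
rewrite !(rs_mk _ _ _ hA) res0 subr0; exact: (LR HL).
Qed.

End Quot.

Definition Lf (P : presheaf) (G : sheaf) (f : pmorph P G) (U : subset_of) (g : sec G U) : Prop :=
  exists s, covl U s /\ forall V (h : incl V U), List.In V s -> exists x : sec P V, mapp f x = res h g.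

Arguments Lf {P G} f U g.

Lemma collect_covers (U : subset_of) (s : seq subset_of) (Q : subset_of -> seq subset_of -> Prop) :
  (forall V, List.In V s -> exists t, covl V t /\ Q V t) ->
  exists f, (forall V, List.In V s -> exists t, covl V t /\ forall W, List.In W t -> List.In W f) /\
     (forall W, List.In W f -> exists V t, [/\ List.In V s, covl V t, Q V t & List.In W t]).
Proof.
elim: s => [|V s IH] H; first by exists [::]; split.
have [t [ht hQ]] := H V (or_introl erefl).
have [f [h1 h2]] := IH (fun W hW => H W (or_intror hW)).
exists (t ++ f); split.
  move=> W [<-|hW]; first by exists t; split=> // W' hW'; apply/In_cat; left.
  have [t' [ht' hm]] := h1 W hW; exists t'; split=> // W' /hm hW'; apply/In_cat; right; exact: hW'.
move=> W /In_cat [hW|hW]; first by exists V, t; split=> //; left.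
have [V' [t' [a1 a2 a3 a4]]] := h2 W hW; exists V', t'; split=> //; right; exact: a1.
Qed.

Lemma Lf_props (P : presheaf) (G : sheaf) (f : pmorph P G) : Lprops (Lf f).
Proof.
split.
- move=> W; exists [:: W]; split; first exact: covl_single.
  by move=> V h _; exists 0; rewrite mapp0 res0.
- move=> W x y [s [hs Hs]] [t [ht Ht]].
  exists [seq inter a b | a <- s, b <- t]; split; first exact: (covl_refine hs ht).
  move=> V h hV; have [a [b [ha hb eV]]] := In_allpairsP hV; subst V.
  have [xa exa] := Hs a (covl_sub hs ha) ha; have [yb eyb] := Ht b (covl_sub ht hb) hb.
  exists (res (@incl_interl a b) xa - res (@incl_interr a b) yb).
  by rewrite mappB !mapp_nat exa eyb !resK resB; congr (_ - _); apply: res_irr.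
- move=> W W' h x [s [hs Hs]].
  exists (map (fun V => inter V W') s); split; first exact: (covl_restr hs h).
  move=> V hV hVin; have [a [eV ha]] := In_mapP hVin; subst V.
  have [xa exa] := Hs a (covl_sub hs ha) ha.
  exists (res (@incl_interl a W') xa).
  by rewrite mapp_nat exa !resK; apply: res_irr.
- move=> W s x hs H.
  pose Q := fun (V : subset_of) (t : seq subset_of) => forall V' (h' : incl V' W),
      List.In V' t -> exists y : sec P V', mapp f y = res h' x.
  have Hc : forall V, List.In V s -> exists t, covl V t /\ Q V t.
    move=> V hV; have [t [ht Ht]] := H V (covl_sub hs hV) hV; exists t; split=> // V' h' hV'.
    have [y ey] := Ht V' (covl_sub ht hV') hV'; exists y; rewrite ey resK; apply: res_irr.
  have [F [h1 h2]] := collect_covers W s Q Hc.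
  exists F; split.
    apply: (covl_trans hs h1) => W' hW'.
    have [V [t [hV ht _ hW't]]] := h2 W' hW'.
    by move=> z /(covl_sub ht hW't) /(covl_sub hs hV).
  move=> V' h' hV'; have [V [t [hV ht Qt hV't]]] := h2 V' hV'.
  exact: Qt.
Qed.

Lemma epi_local (P : presheaf) (G : sheaf) (f : pmorph P G) :
  (forall (H : sheaf) (a b : pmorph G H),
     (forall U (x : sec P U), mapp a (mapp f x) = mapp b (mapp f x)) ->
     forall U (y : sec G U), mapp a y = mapp b y) ->
  forall U (g : sec G U), Lf f U g.
Proof.
move=> epi U g.
pose HL := Lf_props P G f.
apply: (ap_zero _ _ HL).
have key : mapp (ap _ _ HL) g = mapp (zm _ _ HL) g.
  apply: (epi (Hsh _ _ HL)) => V x.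
  rewrite [RHS]/=; apply: (ap_L _ _ HL).
exists [:: V]; split; first exact: covl_single.
  by move=> V' h _; exists (res h x); rewrite mapp_nat.
exact: key.
Qed.

Set Implicit Arguments.
Local Close Scope ring_scope.

Fixpoint seqcl (Mm : nat -> nat) (i : nat) : nat * nat :=
  match i with
  | 0 => ((Mm 3).+1, 1)
  | i'.+1 => let: (c, l) := seqcl Mm i' in
             (c + l, if Mm (3 * l.+1) < c + l then l.+1 else l)
  end.

Section Seq.
Variable Mm : nat -> nat.
Hypothesis Mmono : forall a b, a <= b -> Mm a <= Mm b.
Definition cc i := (seqcl Mm i).1.
Definition lam i := (seqcl Mm i).2.

Lemma cc_succ i : cc i.+1 = cc i + lam i.
Proof. by rewrite /cc /lam /=; case: (seqcl Mm i). Qed.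

Lemma lam_succ i : lam i.+1 = if Mm (3 * (lam i).+1) < cc i.+1 then (lam i).+1 else lam i.
Proof. by rewrite cc_succ /cc /lam /=; case: (seqcl Mm i). Qed.

Lemma lam_pos i : 0 < lam i.
Proof. elim: i => [//|i IH]; rewrite lam_succ; case: ifP => //. Qed.

Lemma lam_le_succ i : lam i <= lam i.+1.
Proof. by rewrite lam_succ; case: ifP. Qed.

Lemma lam_mono i j : i <= j -> lam i <= lam j.
Proof.
move=> /subnK <-; elim: (j - i) => [|d IH]; first by rewrite add0n.
by apply: (leq_trans IH); rewrite addSn; apply: lam_le_succ.
Qed.

Lemma cc_lt_succ i : cc i < cc i.+1.
Proof. by rewrite cc_succ -[X in X < _]addn0 ltn_add2l lam_pos. Qed.

Lemma cc_mono i j : i <= j -> cc i <= cc j.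
Proof.
move=> /subnK <-; elim: (j - i) => [|d IH]; first by rewrite add0n.
by apply: (leq_trans IH); rewrite addSn; apply: ltnW; apply: cc_lt_succ.
Qed.

Lemma cc_ge i : i <= cc i.
Proof. elim: i => [//|i IH]; exact: (leq_ltn_trans IH (cc_lt_succ i)). Qed.

Lemma cc_inv i : Mm (3 * lam i) < cc i.
Proof.
elim: i => [|i IH]; first by rewrite /cc /lam /=.
rewrite lam_succ; case: ifP => // _.
by apply: (leq_trans IH); apply: ltnW; apply: cc_lt_succ.
Qed.

Lemma lam_unbounded r : exists i, r <= lam i.
Proof.
elim: r => [|r [i hi]]; first by exists 0.
have key : forall m, r < lam (i + m) \/ m <= cc (i + m).
  elim=> [|m IHm]; first by right.
  case: IHm => [h|h]; first by left; rewrite addnS; apply: (leq_trans h); apply: lam_le_succ.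
  case: (ltnP r (lam (i + m.+1))) => h2; first by left.
  right; rewrite addnS; exact: (leq_ltn_trans h (cc_lt_succ _)).
pose m0 := (Mm (3 * r.+1)).+1.
have hm0 : m0 = (Mm (3 * r.+1)).+1 by [].
clearbody m0.
case: (key m0) => h; first by exists (i + m0).
case: (ltnP r (lam (i + m0))) => h2; first by exists (i + m0).
have h4 := lam_mono (leq_addr m0 i).
have hl : lam (i + m0) = r by apply/eqP; rewrite eqn_leq h2 (leq_trans hi h4).
exists (i + m0).+1; rewrite lam_succ hl.
have h5 := cc_lt_succ (i + m0).
case: ifP => // /negbT; rewrite -leqNgt => h6.
exfalso; lia.
Qed.

Lemma locate x : cc 0 <= x -> exists i, cc i <= x < cc i.+1.
Proof.
move=> h0.
have hex : exists i, x < cc i by exists x.+1; apply: (leq_trans _ (cc_ge _)).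
have [i hi hmin] := ex_minnP hex.
case: i hi hmin => [|i] hi hmin; first by rewrite ltnNge h0 in hi.
exists i; rewrite hi andbT leqNgt; apply/negP => h.
by have := hmin i h; rewrite ltnn.
Qed.

Lemma lam_ge i j : i <= j -> lam i <= lam j. Proof. exact: lam_mono. Qed.

Definition Kp k : subset_of := fun x => cc k.*2 <= x < cc k.*2.+3.
Definition Op k : subset_of := fun x => cc k.*2.+2 <= x < cc k.*2.+3.

Lemma cc_facts k : [/\ cc k.+1 = cc k + lam k, cc k.+2 = cc k.+1 + lam k.+1,
   cc k.+3 = cc k.+2 + lam k.+2, cc k.+4 = cc k.+3 + lam k.+3 & cc k.+4.+1 = cc k.+4 + lam k.+4].
Proof. by rewrite !cc_succ. Qed.

Lemma lam_facts k : [/\ lam k <= lam k.+1, lam k.+1 <= lam k.+2, lam k.+2 <= lam k.+3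
   & lam k.+3 <= lam k.+4].
Proof. by rewrite !lam_le_succ. Qed.

Lemma O_K k : incl (Op k) (Kp k).
Proof.
move=> x; rewrite /Op /Kp => /andP [h1 h2]; rewrite h2 andbT.
apply: leq_trans h1; apply: cc_mono; lia.
Qed.

Lemma O_K1 k : incl (Op k) (Kp k.+1).
Proof.
move=> x; rewrite /Op /Kp => /andP [h1 h2].
have : cc k.*2.+3 <= cc (k.+1).*2.+3 by apply: cc_mono; lia.
rewrite doubleS; lia.
Qed.

Lemma K_ball k y : Kp k y -> dist (cc k.*2.+2) y <= 3 * lam k.*2.+2.
Proof.
rewrite /Kp /dist => /andP [h1 h2].
have [e1 e2 e3 _ _] := cc_facts k.*2.
have [l1 l2 _ _] := lam_facts k.*2.
lia.
Qed.

Lemma K_inter k k' x : Kp k x -> Kp k' x -> k <> k' ->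
  (k' = k.+1 /\ Op k x) \/ (k = k'.+1 /\ Op k' x).
Proof.
rewrite /Kp /Op => /andP [h1 h2] /andP [h3 h4] hne.
case: (ltngtP k k') => hk; last by [].
- case: (ltngtP k.+1 k') => hk2.
  + have : cc k.*2.+3 <= cc k'.*2 by apply: cc_mono; lia.
    lia.
  + lia.
  + by left; split=> //; subst k'; rewrite doubleS in h3; rewrite h3 h2.
- case: (ltngtP k'.+1 k) => hk2.
  + have : cc k'.*2.+3 <= cc k.*2 by apply: cc_mono; lia.
    lia.
  + lia.
  + by right; split=> //; subst k; rewrite doubleS in h1; rewrite h1 h4.
Qed.

Lemma ballK R : exists N, forall x, N < x -> exists k, forall y, dist x y <= R -> Kp k y.
Proof.
have [i0 hi0] := lam_unbounded R.*2.
exists (cc i0.+1) => x hx.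
have [i /andP [hi1 hi2]] := locate (leq_trans (cc_mono (leq0n i0.+1)) (ltnW hx)).
have hii : i0 < i.
  rewrite ltnNge; apply/negP => h.
  have h' : i.+1 <= i0.+1 by [].
  have := cc_mono h'; lia.
have hl : forall j, i.-1 <= j -> R.*2 <= lam j.
  by move=> j hj; apply: (leq_trans hi0); apply: lam_mono; lia.
move: (odd_double_half i); set k := i./2; clearbody k.
case: (odd i) => ei; rewrite ?add0n ?add1n in ei; subst i; last first.
- (* i = k.*2 even, i >= 1 so k >= 1 *)
  case: k hii hi1 hi2 hl => [|k] hii hi1 hi2 hl; first by lia.
  rewrite doubleS in hi1 hi2 hl.
  have [e1 e2 e3 e4 e5] := cc_facts k.*2.
  have l0 := hl k.*2.+1 ltac:(lia); have l1 := hl k.*2.+2 ltac:(lia);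
  have l2 := hl k.*2.+3 ltac:(lia).
  case: (ltnP (x + R) (cc k.*2.+3)) => hxr.
    exists k => y; rewrite /Kp /dist => hy.
    have := cc_mono (leq0n 0); lia.
  exists k.+1 => y; rewrite /Kp /dist doubleS => hy; lia.
-
  have [e1 e2 e3 e4 e5] := cc_facts k.*2.
  have l0 := hl k.*2 ltac:(lia); have l1 := hl k.*2.+1 ltac:(lia);
  have l2 := hl k.*2.+2 ltac:(lia).
  exists k => y; rewrite /Kp /dist => hy; lia.
Qed.

Lemma O_sep R : exists N, forall k k' x y, k <> k' -> N <= k -> Op k x -> Op k' y -> R < dist x y.
Proof.
have [i1 hi1] := lam_unbounded R.+1.
exists i1 => k k' x y hne hN; rewrite /Op /dist => /andP [h1 h2] /andP [h3 h4].
case: (ltngtP k k') => hk; last by [].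
- have hc : cc k.*2.+4 <= cc k'.*2.+2 by apply: cc_mono; lia.
  have := cc_succ k.*2.+3; have := lam_mono (_ : i1 <= k.*2.+3); lia.
- have hc : cc k'.*2.+3 <= cc k.*2.+1 by apply: cc_mono; lia.
  have := cc_succ k.*2.+1; have := lam_mono (_ : i1 <= k.*2.+1); lia.
Qed.

Lemma O_bound N : exists M, forall k x, k < N -> Op k x -> x <= M.
Proof.
exists (cc N.*2.+3) => k x hk; rewrite /Op => /andP [_ h].
apply: ltnW; apply: (leq_trans h); apply: cc_mono; lia.
Qed.
End Seq.

Lemma In_iota a n i : a <= i < a + n -> List.In i (iota a n).
Proof. by move=> h; apply/InP; rewrite mem_iota. Qed.

Lemma group_cover (O : nat -> subset_of) (Mk : nat -> Prop) (lab : nat -> nat) (B : nat) :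
  (forall N, exists M, forall k x, k < N -> O k x -> x <= M) ->
  (forall R, exists N, forall k k' x y, k <> k' -> N <= k -> O k x -> O k' y -> R < dist x y) ->
  (forall k, Mk k -> lab k < B) ->
  covl (fun x => exists k, Mk k /\ O k x)
       [seq (fun x => exists k, [/\ Mk k, lab k = l & O k x]) | l <- iota 0 B].
Proof.
move=> hb hs hl; apply: deep_covl.
  move=> V hV; have [l [<- _]] := In_mapP hV.
  by move=> x [k [? _ ?]]; exists k.
move=> R; have [N HN] := hs R; have [M HM] := hb N.
exists M => x hx [k [hMk hOk]].
have hkN : N <= k by rewrite leqNgt; apply/negP => h; have := HM k x h hOk; rewrite leqNgt hx.
exists (fun x => exists k', [/\ Mk k', lab k' = lab k & O k' x]); split.
  apply: (In_map (fun l x => exists k, [/\ Mk k, lab k = l & O k x])).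
  by apply: In_iota; rewrite add0n hl.
move=> y [k' [hMk' hOk']] hxy.
case: (eqVneq k k') => [ek|hne]; first by subst k'; exists k.
have hne' : k <> k' by move=> e; rewrite e eqxx in hne.
have := HN k k' x y hne' hkN hOk hOk'.
by rewrite ltnNge hxy.
Qed.


Local Open Scope ring_scope.

Definition pcomp (F G H : presheaf) (f : pmorph F G) (g : pmorph G H) : pmorph F H.
Proof.
refine (@PMorph F H (fun U x => mapp g (mapp f x)) _ _).
  by move=> U x y; rewrite !mapp_sub.
by move=> U V h x; rewrite !mapp_nat.
Defined.

Lemma lift_list (P G : presheaf) (f : pmorph P G) U (g : sec G U) s :
  (forall V, List.In V s -> incl V U) ->
  (forall V (h : incl V U), List.In V s -> exists x : sec P V, mapp f x = res h g) ->
  exists l : seq {V : subset_of & sec P V}, map (@projT1 _ _) l = s /\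
    forall a (h : incl (projT1 a) U), List.In a l -> mapp f (projT2 a) = res h g.
Proof.
elim: s => [|V s IH] hsub H; first by exists [::].
have [x ex] := H V (hsub V (or_introl erefl)) (or_introl erefl).
have [l [el hl]] := IH (fun W hW => hsub W (or_intror hW)) (fun W h hW => H W h (or_intror hW)).
exists (existT _ V x :: l); split; first by rewrite /= el.
move=> a h [ea|ha]; last exact: hl.
subst a; rewrite /= ex; apply: res_irr.
Qed.

Fixpoint mmax (f : nat -> nat) (R : nat) : nat :=
  match R with 0 => f 0 | R'.+1 => maxn (mmax f R') (f R'.+1) end.

Lemma mmax_ge f R : (f R <= mmax f R)%N.
Proof. by case: R => [|R] //=; rewrite leq_maxr. Qed.

Fixpoint hseq (A : zmodType) (al : nat -> A) (k : nat) : A :=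
  match k with 0 => 0 | k'.+1 => hseq al k' - al k' end.

Lemma foldr_max_ge (s : seq nat) x : List.In x s -> (x <= foldr maxn 0 s)%N.
Proof.
elim: s => [|y s IH] //= [->|h]; first exact: leq_maxl.
by apply: (leq_trans (IH h)); exact: leq_maxr.
Qed.

Lemma lab_decode m1 m2 (b1 b2 : bool) : (m1.*2 + b1 = m2.*2 + b2)%N -> m1 = m2 /\ b1 = b2.
Proof. by case: b1; case: b2 => /= h; split => //; lia. Qed.

Lemma zmod_rearr (Z : zmodType) (x1 x2 e1 e2 : Z) : x1 - x2 = e1 - e2 -> x1 - e1 = x2 - e2.
Proof.
move=> h; have -> : x1 = (x1 - x2) + x2 by rewrite subrK.
by rewrite h -addrA addrC addrA subrK.
Qed.

Unset Implicit Arguments.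
Theorem mainTheorem5 (A : finZmodType) (AX : sheaf)
  (eta : pmorph (cst_presheaf A) AX) :
  is_sheafification eta -> H1ct_vanishes AX.
Proof.
move=> hsh I Q i p hI hi hex hepi q.
have eta_epi : forall (H : sheaf) (a b : pmorph AX H),
    (forall U (x : sec (cst_presheaf A) U), mapp a (mapp eta x) = mapp b (mapp eta x)) ->
    forall U (y : sec AX U), mapp a y = mapp b y.
  move=> H a b hab U y.
  have [psi [hpsi huniq]] := hsh H (pcomp eta a).
  have ea := huniq a (fun U x => erefl).
  have eb := huniq b (fun U x => esym (hab U x)).
  by rewrite ea eb.
have pi0 : forall U (x : sec AX U), mapp p (mapp i x) = 0.
  by move=> U x; apply/(hex U (mapp i x)); exists x.
have [s0 [hs0 Hs0]] := epi_local _ _ p hepi Defs.setX q.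
have [l [el hl]] := lift_list (covl_sub hs0) Hs0.
pose dI := existT (fun V => sec I V) set0' 0.
pose V := fun j => projT1 (nth dI l j).
pose t := fun j => (projT2 (nth dI l j) : sec I (V j)).
have hcovX : covl Defs.setX (map (@projT1 _ _) l) by rewrite el.
have hlift : forall j (h : incl (V j) Defs.setX), mapp p (t j) = res h q.
  move=> j h; case: (ltnP j (size l)) => hj.
    exact: (hl _ h (nth_In dI hj)).
  move: h; rewrite /t /V (nth_default dI hj) /= => h.
  rewrite mapp0; apply: sec_bounded; exists 0%N => x [].
have hC : forall j1 j2, exists c : sec AX (inter (V j1) (V j2)),
    mapp i c = res (@incl_interl _ _) (t j1) - res (@incl_interr _ _) (t j2).
  move=> j1 j2; apply/hex.
  rewrite mappB !mapp_nat (hlift j1 (fun _ _ => Logic.I)) (hlift j2 (fun _ _ => Logic.I)) !resK.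
  by apply/eqP; rewrite subr_eq0; apply/eqP; apply: res_irr.
pose C := fun j1 j2 => proj1_sig (cid (hC j1 j2)).
have eC : forall j1 j2, mapp i (C j1 j2) =
    res (@incl_interl _ _) (t j1) - res (@incl_interr _ _) (t j2).
  by move=> j1 j2; rewrite /C; case: cid.
have hK : forall j1 j2, exists lk : seq {U : subset_of & sec (cst_presheaf A) U},
    covl (inter (V j1) (V j2)) (map (@projT1 _ _) lk) /\
    forall u (h : incl (projT1 u) (inter (V j1) (V j2))), List.In u lk ->
      mapp eta (projT2 u) = res h (C j1 j2).
  move=> j1 j2.
  have [s1 [hs1 Hs1]] := epi_local _ _ eta eta_epi _ (C j1 j2).
  have [lk [elk hlk]] := lift_list (covl_sub hs1) Hs1.
  by exists lk; rewrite elk.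
pose Kc := fun j1 j2 => proj1_sig (cid (hK j1 j2)).
have hKc : forall j1 j2, covl (inter (V j1) (V j2)) (map (@projT1 _ _) (Kc j1 j2)) /\
    forall u (h : incl (projT1 u) (inter (V j1) (V j2))), List.In u (Kc j1 j2) ->
      mapp eta (projT2 u) = res h (C j1 j2).
  by move=> j1 j2; rewrite /Kc; case: cid.
pose n := size l.
pose dK := existT (fun U => sec (cst_presheaf A) U) set0' (0 : A).
have hbound : forall R, exists M, forall x, (M < x)%N ->
   (exists j, (j < n)%N /\ forall y, (dist x y <= R)%N -> V j y) /\
   (forall j1 j2, (j1 < n)%N -> (j2 < n)%N -> inter (V j1) (V j2) x ->
      exists m, (m < size (Kc j1 j2))%N /\ forall y, inter (V j1) (V j2) y ->
        (dist x y <= R)%N -> projT1 (nth dK (Kc j1 j2) m) y).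
  move=> R.
  have [M1 H1] := covl_deep hcovX R.
  have inner : forall j1, (j1 < n)%N -> exists M, forall x, (M < x)%N ->
      forall j2, (j2 < n)%N -> inter (V j1) (V j2) x ->
      exists m, (m < size (Kc j1 j2))%N /\ forall y, inter (V j1) (V j2) y ->
        (dist x y <= R)%N -> projT1 (nth dK (Kc j1 j2) m) y.
    move=> j1 hj1.
    have [M HM] := ex_bound_lt (n := n) (Q := fun j2 x => inter (V j1) (V j2) x ->
      exists m, (m < size (Kc j1 j2))%N /\ forall y, inter (V j1) (V j2) y ->
        (dist x y <= R)%N -> projT1 (nth dK (Kc j1 j2) m) y)
      (fun j2 hj2 => let: ex_intro M HM := covl_deep (proj1 (hKc j1 j2)) R in
        ex_intro _ M (fun x hx hin =>
          let: ex_intro U (conj hU hb) := HM x hx hin in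
          let: ex_intro u (conj eu hu) := In_mapP hU in
          let: ex_intro m (conj hm em) := In_nth dK hu in
          ex_intro _ m (conj hm (fun y hy hxy =>
            eq_ind_r (fun z => projT1 z y) (eq_ind U (fun W => W y) (hb y hy hxy) _ (esym eu)) em)))).
    by exists M => x hx j2 hj2; apply: HM.
  have [M2 H2] := ex_bound_lt inner.
  exists (maxn M1 M2) => x hx; split.
    have [W [hW hb]] := H1 x (leq_ltn_trans (leq_maxl _ _) hx) Logic.I.
    have [a [ea ha]] := In_mapP hW.
    have [j [hj eja]] := In_nth dI ha.
    exists j; split=> // y hy; rewrite /V eja ea; exact: hb.
  move=> j1 j2 hj1 hj2 hin.
  exact: (H2 j1 hj1 x (leq_ltn_trans (leq_maxr _ _) hx) j2 hj2 hin).
have [Mf hMf] := choice hbound.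
pose Mm := mmax Mf.
have hMm : forall R x, (Mm R < x)%N -> (Mf R < x)%N.
  by move=> R x; apply: leq_ltn_trans; apply: mmax_ge.
have hj : forall k, exists j, (j < n)%N /\ incl (Kp Mm k) (V j).
  move=> k.
  have [[j [hj hb]] _] := hMf (3 * lam Mm k.*2.+2)%N (cc Mm k.*2.+2) (hMm _ _ (cc_inv Mm _)).
  by exists j; split=> // y hy; apply: hb; apply: K_ball.
have [jf hjf] := choice hj.
have hm : forall k, exists m, (m < size (Kc (jf k) (jf k.+1)))%N /\
    incl (Op Mm k) (projT1 (nth dK (Kc (jf k) (jf k.+1)) m)).
  move=> k.
  have hx0 : Op Mm k (cc Mm k.*2.+2).
    rewrite /Op leqnn /= (cc_succ Mm k.*2.+2); have := lam_pos Mm k.*2.+2; lia.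
  have hin : inter (V (jf k)) (V (jf k.+1)) (cc Mm k.*2.+2).
    by split; [apply: (proj2 (hjf k)); apply: O_K|apply: (proj2 (hjf k.+1)); apply: O_K1].
  have [_ H2] := hMf (3 * lam Mm k.*2.+2)%N (cc Mm k.*2.+2) (hMm _ _ (cc_inv Mm _)).
  have [m [hm hb]] := H2 (jf k) (jf k.+1) (proj1 (hjf k)) (proj1 (hjf k.+1)) hin.
  exists m; split=> // y hy; apply: hb.
    by split; [apply: (proj2 (hjf k)); apply: O_K|apply: (proj2 (hjf k.+1)); apply: O_K1].
  by apply: K_ball; apply: O_K.
have [mf hmf] := choice hm.
pose alpha := fun k => (projT2 (nth dK (Kc (jf k) (jf k.+1)) (mf k)) : A).
pose hs := hseq alpha.
pose comb := fun k => (odd k, jf k, hs k).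
pose Gs := fun (c : bool * nat * A) => (fun x => exists k, comb k = c /\ Kp Mm k x) : subset_of.
have hGs : forall c, incl (Gs c) (V c.1.2).
  by move=> c x [k [<- hk]]; exact: (proj2 (hjf k)) x hk.
pose piece := fun c : bool * nat * A => existT (fun W => sec I W) (Gs c)
   (res (hGs c) (t c.1.2) - mapp i (@mapp _ _ eta (Gs c) c.2)).
pose combos := [seq (bj, be) | bj <- [seq (b, j) | b <- [:: false; true], j <- iota 0 n], be <- enum A].
have comb_in : forall k, List.In (comb k) combos.
  move=> k; apply: (In_allpairs (fun bj be => (bj, be))).
    apply: (In_allpairs (fun b j => (b, j))); first by case: (odd k); [right; left|left].
    by apply: In_iota; rewrite add0n (proj1 (hjf k)).
  by apply/InP; rewrite mem_enum.
pose pieces := map piece combos.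
have hcovP : covl Defs.setX (map (@projT1 _ _) pieces).
  apply: deep_covl; first by move=> W _ x _.
  move=> R; have [N HN] := ballK Mm R; exists N => x hx _.
  have [k hk] := HN x hx; exists (Gs (comb k)); split.
    exact: (In_map (@projT1 _ _) (In_map piece (comb_in k))).
  by move=> y _ hy; exists k; split=> //; apply: hk.
have edge : forall ja jb (ba bb : A) m (G0 : subset_of) (ha : incl G0 (V ja)) (hb : incl G0 (V jb)),
    (m < size (Kc ja jb))%N -> incl G0 (projT1 (nth dK (Kc ja jb) m)) ->
    (projT2 (nth dK (Kc ja jb) m) : A) = ba - bb ->
    res ha (t ja) - mapp i (@mapp _ _ eta G0 ba) = res hb (t jb) - mapp i (@mapp _ _ eta G0 bb).
  move=> ja jb ba bb m G0 ha hb hmm hGU hal.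
  apply: zmod_rearr.
  have hu : List.In (nth dK (Kc ja jb) m) (Kc ja jb) := nth_In dK hmm.
  have hU : incl (projT1 (nth dK (Kc ja jb) m)) (inter (V ja) (V jb)) :=
    covl_sub (proj1 (hKc ja jb)) (In_map _ hu).
  have e1 := proj2 (hKc ja jb) _ hU hu.
  have e3 : mapp i (@mapp _ _ eta G0 (ba - bb)) = res ha (t ja) - res hb (t jb).
    rewrite -hal.
    have := congr1 (fun z => mapp i (res hGU z)) e1.
    rewrite /= -mapp_nat /= => ->.
    rewrite resK mapp_nat eC resB !resK; congr (_ - _); apply: res_irr.
  by rewrite -e3 mappB mappB.
have hcompP : forall a b, List.In a pieces -> List.In b pieces ->
    res (@incl_interl (projT1 a) (projT1 b)) (projT2 a) =
    res (@incl_interr (projT1 a) (projT1 b)) (projT2 b).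
  move=> a b ha hb.
  have [c1 [ea hc1]] := In_mapP ha; have [c2 [eb hc2]] := In_mapP hb.
  subst a b.
  case: (eqVneq c1 c2) => [ec|hne]; first by subst c2; apply: res_irr.
  pose Mk := fun k => ((comb k == c1) && (comb k.+1 == c2)) || ((comb k == c2) && (comb k.+1 == c1)).
  pose MkP := fun k => is_true (Mk k).
  pose lab := fun k => ((mf k).*2 + (comb k == c2))%N.
  pose Bm := foldr maxn 0%N [seq size (Kc j1 j2) | j1 <- iota 0 n, j2 <- iota 0 n].
  have hlab : forall k, MkP k -> (lab k < Bm.*2.+2)%N.
    move=> k _; have hmk := proj1 (hmf k).
    have hB : (size (Kc (jf k) (jf k.+1)) <= Bm)%N.
      apply: foldr_max_ge; apply: (In_allpairs (fun j1 j2 => size (Kc j1 j2)));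
        apply: In_iota; rewrite add0n; exact: proj1 (hjf _).
    rewrite /lab; case: (comb k == c2) => /=; lia.
  have hcovO := group_cover (O_bound Mm) (O_sep Mm) hlab.
  have hc21 : (c2 == c1) = false by rewrite eq_sym; apply/negbTE.
  have hD : covl (inter (Gs c1) (Gs c2))
      [seq (fun x => exists k, [/\ MkP k, lab k = l0 & Op Mm k x]) | l0 <- iota 0 (Bm.*2.+2)].
    apply: (covl_ext _ hcovO) => x; split.
      move=> [k [hMk hO]]; rewrite /MkP /Mk in hMk.
      case/orP: hMk => /andP [/eqP e1 /eqP e2].
        by split; [exists k|exists k.+1]; split=> //; [exact: O_K|exact: O_K1].
      by split; [exists k.+1|exists k]; split=> //; [exact: O_K1|exact: O_K].
    move=> [[k1 [e1 hk1]] [k2 [e2 hk2]]].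
    have hne12 : k1 <> k2 by move=> e; subst k2; rewrite -e1 -e2 eqxx in hne.
    case: (K_inter hk1 hk2 hne12) => [[ek hO]|[ek hO]].
      by subst k2; exists k1; split=> //; rewrite /MkP /Mk e1 e2 !eqxx.
    by subst k1; exists k2; split=> //; rewrite /MkP /Mk e1 e2 !eqxx orbT.
  apply: (sep_l hD) => G0 hG0 hG0in.
  have [l0 [eG0 hl0]] := In_mapP hG0in; subst G0.
  rewrite !resB !resK -!mapp_nat /=.
  case: (pselect (exists k0, MkP k0 /\ lab k0 = l0)) => [[k0 [hMk0 hl0k]]|hnone]; last first.
    apply: sec_bounded; exists 0%N => x [k [hMk hlk hO]]; exfalso; apply: hnone; by exists k.
  have hsame : forall k, MkP k -> lab k = l0 -> mf k = mf k0 /\ (comb k == c2) = (comb k0 == c2).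
    by move=> k hk hlk; apply: lab_decode; rewrite -/(lab k) -/(lab k0) hlk hl0k.
  have key : forall d1 d2, (forall k, MkP k -> lab k = l0 -> comb k = d1 /\ comb k.+1 = d2) ->
      forall (h1 : incl (fun x => exists k, [/\ MkP k, lab k = l0 & Op Mm k x]) (V d1.1.2))
             (h2 : incl (fun x => exists k, [/\ MkP k, lab k = l0 & Op Mm k x]) (V d2.1.2)),
      res h1 (t d1.1.2) - mapp i (@mapp _ _ eta _ d1.2) =
      res h2 (t d2.1.2) - mapp i (@mapp _ _ eta _ d2.2).
    move=> d1 d2 H h1 h2.
    have [ek1 ek2] := H k0 hMk0 hl0k.
    have ej1 : jf k0 = d1.1.2 by rewrite -ek1.
    have ej2 : jf k0.+1 = d2.1.2 by rewrite -ek2.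
    apply: (edge d1.1.2 d2.1.2 d1.2 d2.2 (mf k0)).
    - by rewrite -ej1 -ej2; exact: proj1 (hmf k0).
    - move=> x [k [hk hlk hO]]; have [fk1 fk2] := H k hk hlk; have [em _] := hsame k hk hlk.
      have e1 : jf k = d1.1.2 by rewrite -fk1.
      have e2 : jf k.+1 = d2.1.2 by rewrite -fk2.
      by have := proj2 (hmf k) x hO; rewrite em e1 e2.
    - rewrite -ej1 -ej2; change (alpha k0 = d1.2 - d2.2).
      have hh1 : hs k0 = d1.2 by rewrite -ek1.
      have hh2 : hs k0.+1 = d2.2 by rewrite -ek2.
      rewrite -hh1 -hh2 /hs /=.
      by rewrite opprB addrC subrK.
  case ho : (comb k0 == c2).
  - apply: esym; apply: key => k hk hlk.
    have [_ eo] := hsame k hk hlk; rewrite ho in eo.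
    move: hk; rewrite /MkP /Mk (eqP eo) hc21 /= eqxx /= => /eqP e; by split.
  - apply: key => k hk hlk.
    have [_ eo] := hsame k hk hlk; rewrite ho in eo.
    move: hk; rewrite /MkP /Mk eo andFb orbF => /andP [/eqP e /eqP e']; by split.
have [g hg] := glue_l hcovP hcompP.
exists g.
apply: (@sep_l Q _ _ hcovP) => W hW hWin.
have [a [ea ha]] := In_mapP hWin; have [c [ec hc]] := In_mapP ha.
subst W a.
rewrite -mapp_nat (hg _ hW (In_map piece hc)) /= mappB pi0 subr0 mapp_nat.
rewrite (hlift _ (fun _ _ => Logic.I)) resK; apply: res_irr.
Qed.
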